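(* The inequality $n^{1/2}\le S_s(n)$ holds for almost all positive integers $n$, i.e., the set of $n$ for which it holds has asymptotic density $1$.
   Context: $s(n)=\sigma(n)-n$ is the sum of proper divisors of $n$, and $S_s(n)=\sum_{d\mid n}s(d)$. *)

(* Defs.v *)
From Stdlib Require Import Reals Lra Lia Arith List.
Open Scope R_scope.

Definition divisors_list (n : nat) : list nat :=
  filter (fun d => Nat.eqb (n mod d) 0%nat) (List.seq 1 n).

Definition sigma (n : nat) : nat := fold_right Nat.add 0%nat (divisors_list n).

Definition s_fun (n : nat) : nat := (sigma n - n)%nat.

Definition S_s (n : nat) : nat :=
  fold_right Nat.add 0%nat (map s_fun (divisors_list n)).

Definition count_upto (P : nat -> bool) (N : nat) : nat :=
  length (filter P (List.seq 1 N)).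

Definition has_density_one (P : nat -> bool) : Prop :=
  Un_cv (fun N => INR (count_upto P N) / INR N) 1.

Definition sqrt_le_Ss (n : nat) : bool :=
  if Rle_dec (sqrt (INR n)) (INR (S_s n)) then true else false.

(* Main.v *)
Require Import Defs.
From Stdlib Require Import Reals Lra Lia.
From mathcomp Require Import all_boot.
From mathcomp Require Import zify.
Open Scope nat_scope.


Lemma nd_fact p N : prime p -> N < p -> ~~ (p %| N`!).
Proof.
move=> pp; elim: N => [|N IH] hN; first by rewrite fact0 dvdn1; apply/eqP => e; rewrite e in pp.
rewrite factS Euclid_dvdM // negb_or IH ?(ltnW hN) // andbT.
apply/negP => /dvdn_leq; lia.
Qed.

Lemma dvd_bin p N : prime p -> N < p <= N + N -> p %| 'C(N + N, N).
Proof.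
move=> pp /andP [h1 h2].
have hf := bin_fact (leq_addr N N). rewrite addnK in hf.
have : p %| (N + N)`! by apply: dvdn_fact; rewrite h2 andbT; lia.
rewrite -hf Gauss_dvdl // prime_coprime // Euclid_dvdM // negb_or nd_fact //.
Qed.

Lemma prod_dvd (s : seq nat) m : uniq s -> all prime s -> all (fun p => p %| m) s ->
  \prod_(p <- s) p %| m.
Proof.
elim: s => [|p s IH] /=; first by rewrite big_nil dvd1n.
move=> /andP [ps us] /andP [pp aps] /andP [pm adm].
rewrite big_cons Gauss_dvd ?pm ?IH //.
rewrite prime_coprime // Euclid_dvd_prod //.
rewrite big_has; apply/hasP => [[q qs /=]]; rewrite dvdn_prime2 //; last by move/allP: aps; apply.
by move/eqP => e; move: ps; rewrite e qs.
Qed.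

Lemma bin_le N : 'C(N + N, N) <= 2 ^ (N + N).
Proof.
have := expnDn 1 1 (N + N). rewrite addnn -addnn => ->.
have hN : N < (N + N).+1 by lia.
rewrite (bigD1 (Ordinal hN)) //= !exp1n !muln1; apply: leq_addr.
Qed.

Lemma pow_prod N (s : seq nat) : all (leq N) s -> N ^ size s <= \prod_(p <- s) p.
Proof.
elim: s => [|p s IH] /=; first by rewrite big_nil.
move=> /andP [h1 h2]; rewrite big_cons expnS; apply: leq_mul => //; exact: IH.
Qed.

Lemma key N : N ^ count prime (iota N.+1 N) <= 2 ^ (N + N).
Proof.
apply: leq_trans (bin_le N).
case: N => [|N]; first by [].
set L := [seq p <- iota N.+2 N.+1 | prime p].
apply: (@leq_trans (\prod_(p <- L) p)).
  rewrite -size_filter -/L. apply: pow_prod.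
  apply/allP => x; rewrite mem_filter mem_iota => /andP [_ /andP [h _]]; rewrite /leq; lia.
apply: dvdn_leq; first by rewrite bin_gt0; lia.
apply: prod_dvd.
- by rewrite filter_uniq // iota_uniq.
- by apply/allP => x; rewrite mem_filter => /andP [].
- apply/allP => x; rewrite mem_filter mem_iota => /andP [px hx]; apply: dvd_bin => //; lia.
Qed.

Definition pc N := count prime (iota 1 N).

Lemma pcD N : pc (N + N) = pc N + count prime (iota N.+1 N).
Proof. by rewrite /pc iotaD count_cat add1n. Qed.

Lemma pc_le N : pc N <= N.
Proof. by rewrite /pc; apply: leq_trans (count_size _ _) _; rewrite size_iota. Qed.

Lemma pc_mono m n : m <= n -> pc m <= pc n.
Proof. move=> h; rewrite /pc -(subnKC h) iotaD count_cat; apply: leq_addr. Qed.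

Lemma dyad k : k * count prime (iota (2 ^ k).+1 (2 ^ k)) <= 2 * 2 ^ k.
Proof.
have := key (2 ^ k). rewrite -expnM leq_exp2l // mulnC; lia.
Qed.

Lemma pc_pow k : k * pc (2 ^ k) <= 8 * 2 ^ k.
Proof.
elim: k => [|k IH]; first by [].
case: (leqP k 7) => hk.
  apply: (@leq_trans (k.+1 * 2 ^ k.+1)); first by rewrite leq_mul2l pc_le orbT.
  by rewrite leq_mul2r; apply/orP; right; lia.
rewrite expnS mul2n -addnn pcD.
have hD := dyad k.
set c := pc (2 ^ k) in IH *; set D := count _ _ in hD *; set X := 2 ^ k in IH hD *.
rewrite addnn -mul2n.
have hk0 : 0 < k by lia.
rewrite -(leq_pmul2l hk0).
have e : k * (k.+1 * (c + D)) = k.+1 * (k * c + k * D) by lia.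
rewrite e; apply: (@leq_trans (k.+1 * (10 * X))); first by rewrite leq_mul2l; lia.
nia.
Qed.

Lemma pc_bound k N : 2 ^ k <= N -> k.+1 * pc N <= 16 * N.
Proof.
move=> hN.
have N0 : 0 < N by apply: leq_trans hN; by rewrite expn_gt0.
set j := trunc_log 2 N.
have h1 := trunc_logP (isT : 1 < 2) N0.
have h2 := trunc_log_ltn N (isT : 1 < 2).
have hkj : k <= j.
  have : 2 ^ k < 2 ^ j.+1 by apply: leq_ltn_trans h2.
  by rewrite ltn_exp2l.
have := pc_pow j.+1.
have hm := pc_mono _ _ (ltnW h2).
rewrite -/j in h1 h2 hm *.
move: (pc N) (pc (2 ^ j.+1)) hm => a b hab hb.
rewrite expnS in hb h2.
have : k.+1 * a <= j.+1 * b by apply: leq_mul.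
nia.
Qed.

Lemma cnt0 L : forall m, 1 < m -> count (fun n => n <= 1) (iota m L) = 0.
Proof. elim: L => // L IH m hm /=; rewrite IH; [rewrite leqNgt hm | lia]. by []. Qed.

Lemma cnt1 N : count (fun n => n <= 1) (iota 1 N) <= 1.
Proof. case: N => // N /=; rewrite cnt0. by []. by []. Qed.

Lemma main_count (good : pred nat) :
  (forall n, 1 < n -> ~~ prime n -> good n) ->
  forall k N, 2 ^ k <= N -> k.+1 * (N - count good (iota 1 N)) <= 17 * N.
Proof.
move=> hg k N hN.
have hbad : count (predC good) (iota 1 N) <= 1 + pc N.
  apply: (@leq_trans (count (predU (fun n => n <= 1) prime) (iota 1 N))).
    apply: sub_count => n /=; case: (ltnP 1 n) => h1.
      case: (boolP (prime n)) => hp; first by rewrite orbT. by rewrite (hg n h1 hp).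
    by move=> _; apply/orP; left.
  apply: leq_trans (leq_addr (count (predI (fun n => n <= 1) prime) (iota 1 N)) _) _.
  by rewrite count_predUI; apply: leq_add (cnt1 N) (leqnn _).
have e := count_predC good (iota 1 N); rewrite size_iota in e.
have hk : k.+1 <= N.
  apply: leq_trans hN; elim: k => // k IH; rewrite expnS; lia.
have := pc_bound _ _ hN.
move: (pc N) (count good _) (count (predC good) _) e hbad => a b c e hb h.
have -> : N - b = c by lia.
nia.
Qed.

Lemma seq_iota a N : List.seq a N = iota a N.
Proof. elim: N a => // N IH a /=; by rewrite IH. Qed.

Lemma len_filter (P : nat -> bool) l : length (List.filter P l) = count P l.
Proof. elim: l => // x l IH /=; case: (P x) => /=; rewrite IH //. Qed.

Lemma count_upto_eq P N : count_upto P N = count P (iota 1 N).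
Proof. by rewrite /count_upto seq_iota len_filter. Qed.

Lemma in_le_sum x l : List.In x l -> (x <= List.fold_right Nat.add 0%nat l)%coq_nat.
Proof. elim: l => //= y l IH [->|h]; [lia | have := IH h; lia]. Qed.

Lemma sum_app l l' : List.fold_right Nat.add 0%nat (l ++ l') =
  (List.fold_right Nat.add 0%nat l + List.fold_right Nat.add 0%nat l')%coq_nat.
Proof. elim: l => //= y l IH; rewrite IH; lia. Qed.

Lemma composite_good n b d : (n = b * d)%coq_nat -> (2 <= b)%coq_nat -> (2 <= d)%coq_nat ->
  sqrt_le_Ss n.
Proof.
wlog hdb : b d / (d <= b)%coq_nat.
  move=> W e hb hd; have [h|h] : (d <= b \/ b <= d)%coq_nat by lia.
  exact (W b d h e hb hd).
  apply: (W d b) => //; lia.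
move=> e hb hd.
have hsig : (n + b <= Defs.sigma n)%coq_nat.
  rewrite /Defs.sigma /divisors_list.
  have -> : n = S (n - 1) by lia.
  rewrite List.seq_S List.filter_app sum_app.
  have -> : (1 + (n - 1))%coq_nat = S (n - 1) by lia.
  have hm : Nat.eqb (S (n - 1) mod S (n - 1)) 0 = true by rewrite Nat.mod_same.
  rewrite /= hm /=.
  have : List.In b (List.filter (fun d0 => Nat.eqb (S (n - 1) mod d0) 0) (List.seq 1 (n - 1))).
    apply/List.filter_In; split; first by apply/List.in_seq; nia.
    have -> : S (n - 1) = (d * b)%coq_nat by lia.
    by rewrite Nat.mod_mul //; lia.
  move/in_le_sum; lia.
have hS : (s_fun n <= S_s n)%coq_nat.
  apply: in_le_sum; apply: List.in_map; rewrite /divisors_list.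
  apply/List.filter_In; split; first by apply/List.in_seq; nia.
  by rewrite Nat.mod_same //; lia.
have hb' : (b <= S_s n)%coq_nat by rewrite /s_fun in hS; lia.
rewrite /sqrt_le_Ss; case: Rle_dec => // H; exfalso; apply: H.
apply: Rle_trans (le_INR _ _ hb').
rewrite -(sqrt_square (INR b)); last by apply: pos_INR.
apply: sqrt_le_1_alt; rewrite -mult_INR; apply: le_INR; nia.
Qed.

Lemma good_ok n : 1 < n -> ~~ prime n -> sqrt_le_Ss n.
Proof.
move=> h1 /primePn [|[d /andP [d1 d2] /dvdnP [b eb]]]; first by rewrite ltnNge h1.
apply: (composite_good n b d); [by [] | | lia].
have : b != 0 by apply/eqP => e; rewrite e in eb; rewrite eb in h1.
move=> hb0; have : b != 1 by apply/eqP => e; rewrite e mul1n in eb; rewrite eb ltnn in d2.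
lia.
Qed.

Theorem lemma6p10 : has_density_one sqrt_le_Ss.
Proof.
move=> eps heps.
have [k hk] := INR_archimed eps 17 heps.
exists (2 ^ k)%nat => n hn.
have hn' : 2 ^ k <= n by apply/leP.
have hm := main_count sqrt_le_Ss good_ok k n hn'.
rewrite count_upto_eq.
have hcn : count sqrt_le_Ss (iota 1 n) <= n.
  by apply: leq_trans (count_size _ _) _; rewrite size_iota.
move: (count sqrt_le_Ss (iota 1 n)) hm hcn => c hm hcn.
have npos : Rlt 0 (INR n).
  apply: lt_0_INR; apply/ltP; apply: leq_trans hn'; by rewrite expn_gt0.
have hR : Rle (Rmult (INR k.+1) (Rminus (INR n) (INR c))) (Rmult 17 (INR n)).
  rewrite -minus_INR; last by apply/leP.
  rewrite -(INR_IZR_INZ 17) -!mult_INR; apply: le_INR; apply/leP.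
  by move: hm; rewrite /muln /subn.
have hk1 : Rgt (Rmult (INR k.+1) eps) 17 by rewrite S_INR; lra.
have hc : Rle (INR c) (INR n) by apply: le_INR; apply/leP.
have hK : Rlt 0 (INR k.+1) by apply: lt_0_INR; apply/ltP.
have hx : Rlt (Rminus (INR n) (INR c)) (Rmult eps (INR n)).
  apply: (Rmult_lt_reg_l (INR k.+1)) => //; have := Rmult_lt_compat_r (INR n) _ _ npos hk1; nra.
rewrite /Rdist.
have -> : Rminus (Rdiv (INR c) (INR n)) 1 = Ropp (Rdiv (Rminus (INR n) (INR c)) (INR n)).
  by field; lra.
rewrite Rabs_Ropp Rabs_pos_eq; last first.
  rewrite /Rdiv; apply: Rmult_le_pos; [lra | left; apply: Rinv_0_lt_compat; lra].
apply: (Rmult_lt_reg_r (INR n)) => //.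
rewrite /Rdiv Rmult_assoc Rinv_l; lra.
Qed.
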